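(* Let $F_X,F_Y$ be univariate distributions. The set $\mathfrak{Q}^{F_X,F_Y}$ of bivariate quasi-distributions with margins $F_X,F_Y$ is closed under pointwise infima and suprema (of nonempty subsets). In particular, for every nonempty set $\mathcal{G}$ of bivariate distributions all having margins $F_X$ and $F_Y$, the pointwise infimum $\inf_{F\in\mathcal{G}}F$ and supremum $\sup_{F\in\mathcal{G}}F$ are quasi-distributions (with margins $F_X,F_Y$).
   Context: $\overline{\mathbb{R}}=\mathbb{R}\cup\{-\infty,\infty\}$. A univariate distribution is a nondecreasing $G:\overline{\mathbb{R}}\to[0,1]$ with $G(-\infty)=0$, $G(\infty)=1$ (not necessarily right continuous). The volume of $[x_1,x_2]\times[y_1,y_2]$ w.r.t. $F$ is $F(x_1,y_1)+F(x_2,y_2)-F(x_2,y_1)-F(x_1,y_2)$. A bivariate quasi-distribution is $F:\overline{\mathbb{R}}^2\to[0,1]$ with $F(x,-\infty)=F(-\infty,y)=0$, $F(\infty,\infty)=1$, and nonnegative volume for every rectangle with corners in $\overline{\mathbb{R}}^2$ intersecting the boundary (points having a coordinate $\pm\infty$); a bivariate distribution additionally has nonnegative volume for every rectangle. Margins are $F(\cdot,\infty)$ and $F(\infty,\cdot)$. *)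

(* Defs.v *)
From HB Require Import structures.
From mathcomp Require Import all_boot all_order all_algebra.
From mathcomp Require Import all_classical all_reals.
From mathcomp Require Import constructive_ereal ereal.
Set Implicit Arguments. Unset Strict Implicit. Unset Printing Implicit Defensive.
Import Order.TTheory GRing.Theory Num.Theory.
Local Open Scope classical_set_scope.
Local Open Scope ring_scope.

Section Defs.
Variable R : realType.

Definition einfinite (x : \bar R) : Prop := x = +oo%E \/ x = -oo%E.

Definition univ_distribution (G : \bar R -> R) : Prop :=
  (forall x, 0 <= G x <= 1) /\
  (forall x y : \bar R, (x <= y)%E -> G x <= G y) /\
  G -oo%E = 0 /\ G +oo%E = 1.

Definition volume (F : \bar R -> \bar R -> R) (x1 x2 y1 y2 : \bar R) : R :=
  F x1 y1 + F x2 y2 - F x2 y1 - F x1 y2.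

Definition meets_boundary (x1 x2 y1 y2 : \bar R) : Prop :=
  exists x y : \bar R, [/\ (x1 <= x)%E, (x <= x2)%E, (y1 <= y)%E, (y <= y2)%E
                        & einfinite x \/ einfinite y].

Definition biv_base (F : \bar R -> \bar R -> R) : Prop :=
  (forall x y, 0 <= F x y <= 1) /\
  (forall x, F x -oo%E = 0) /\ (forall y, F -oo%E y = 0) /\
  F +oo%E +oo%E = 1.

Definition quasi_distribution (F : \bar R -> \bar R -> R) : Prop :=
  biv_base F /\
  forall x1 x2 y1 y2 : \bar R, (x1 <= x2)%E -> (y1 <= y2)%E ->
    meets_boundary x1 x2 y1 y2 -> 0 <= volume F x1 x2 y1 y2.

Definition biv_distribution (F : \bar R -> \bar R -> R) : Prop :=
  biv_base F /\
  forall x1 x2 y1 y2 : \bar R, (x1 <= x2)%E -> (y1 <= y2)%E ->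
    0 <= volume F x1 x2 y1 y2.

Definition has_margins (F : \bar R -> \bar R -> R) (FX FY : \bar R -> R) : Prop :=
  (forall x, F x +oo%E = FX x) /\ (forall y, F +oo%E y = FY y).

Definition Qset (FX FY : \bar R -> R) : set (\bar R -> \bar R -> R) :=
  [set F | quasi_distribution F /\ has_margins F FX FY].

Definition pinf (S : set (\bar R -> \bar R -> R)) : \bar R -> \bar R -> R :=
  fun x y => inf [set F x y | F in S].
Definition psup (S : set (\bar R -> \bar R -> R)) : \bar R -> \bar R -> R :=
  fun x y => sup [set F x y | F in S].
End Defs.

(* Main.v *)
Require Import Defs.
From HB Require Import structures.
From mathcomp Require Import all_boot all_order all_algebra.
From mathcomp Require Import all_classical all_reals.
From mathcomp Require Import constructive_ereal ereal.
From mathcomp Require Import lra.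
Set Implicit Arguments. Unset Strict Implicit.
Import Order.TTheory GRing.Theory Num.Theory.
Local Open Scope classical_set_scope.
Local Open Scope ring_scope.

Section Aux.
Variables (R : realType) (T : Type) (S : set T).
Hypothesis S0 : S !=set0.

Definition bnd (a : T -> R) := forall t, S t -> 0 <= a t <= 1.

Lemma img0 (a : T -> R) : [set a t | t in S] !=set0.
Proof. by case: S0 => t St; exists (a t), t. Qed.

Lemma hub (a : T -> R) : bnd a -> has_ubound [set a t | t in S].
Proof. by move=> h; exists 1 => _ [t St <-]; case/andP: (h t St). Qed.

Lemma hlb (a : T -> R) : bnd a -> has_lbound [set a t | t in S].
Proof. by move=> h; exists 0 => _ [t St <-]; case/andP: (h t St). Qed.

Lemma inf_le_pt (a : T -> R) t : bnd a -> S t -> inf [set a t | t in S] <= a t.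
Proof. by move=> h St; have := ge_inf (hlb h); apply; exists t. Qed.

Lemma sup_ge_pt (a : T -> R) t : bnd a -> S t -> a t <= sup [set a t | t in S].
Proof. by move=> h St; have := ub_le_sup (hub h); apply; exists t. Qed.

Lemma inf_diff (a : T -> R) (b : T -> R) c : bnd a -> bnd b -> (forall t, S t -> b t - a t <= c) ->
  inf [set b t | t in S] - inf [set a t | t in S] <= c.
Proof.
move=> ha hb h; rewrite lerBlDr addrC -lerBlDr.
apply: lb_le_inf; first exact: img0.
move=> _ [t St <-]; rewrite lerBlDr.
apply: le_trans (inf_le_pt hb St) _.
by rewrite -lerBlDl h.
Qed.

Lemma sup_diff (a : T -> R) (b : T -> R) c : bnd a -> bnd b -> (forall t, S t -> b t - a t <= c) ->
  sup [set b t | t in S] - sup [set a t | t in S] <= c.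
Proof.
move=> ha hb h; rewrite lerBlDr.
apply: ge_sup; first exact: img0.
move=> _ [t St <-].
apply: le_trans (_ : a t + c <= _); first by rewrite -lerBlDl h.
by rewrite addrC lerD2l; apply: sup_ge_pt.
Qed.

Lemma inf_mono (a : T -> R) (b : T -> R) : bnd a -> bnd b -> (forall t, S t -> a t <= b t) ->
  inf [set a t | t in S] <= inf [set b t | t in S].
Proof.
move=> ha hb h; apply: lb_le_inf; first exact: img0.
by move=> _ [t St <-]; apply: le_trans (inf_le_pt ha St) (h t St).
Qed.

Lemma sup_mono (a : T -> R) (b : T -> R) : bnd a -> bnd b -> (forall t, S t -> a t <= b t) ->
  sup [set a t | t in S] <= sup [set b t | t in S].
Proof.
move=> ha hb h; apply: ge_sup; first exact: img0.
by move=> _ [t St <-]; apply: le_trans (h t St) (sup_ge_pt hb St).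
Qed.

Lemma img_cst (a : T -> R) k : (forall t, S t -> a t = k) -> [set a t | t in S] = [set k].
Proof.
move=> h; apply/seteqP; split=> [_ [t St <-]|_ ->]; first by rewrite /= h.
by case: S0 => t St; exists t => //; rewrite h.
Qed.
End Aux.

Section Main.
Variables (R : realType) (FX FY : \bar R -> R).
Local Open Scope ereal_scope.

Definition conds (F : \bar R -> \bar R -> R) : Prop :=
  [/\ (forall x y1 y2 : \bar R, y1 <= y2 -> (F x y1 <= F x y2)%R),
      (forall y x1 x2 : \bar R, x1 <= x2 -> (F x1 y <= F x2 y)%R),
      (forall x y1 y2 : \bar R, y1 <= y2 -> (F x y2 - F x y1 <= FY y2 - FY y1)%R) &
      (forall y x1 x2 : \bar R, x1 <= x2 -> (F x2 y - F x1 y <= FX x2 - FX x1)%R)].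

Lemma mbx1 (x2 y1 y2 : \bar R) : y1 <= y2 -> meets_boundary -oo x2 y1 y2.
Proof. by move=> le; exists -oo, y1; split => //; [exact: leNye | left; right]. Qed.
Lemma mbx2 (x1 y1 y2 : \bar R) : y1 <= y2 -> meets_boundary x1 +oo y1 y2.
Proof. by move=> le; exists +oo, y1; split => //; [exact: leey | left; left]. Qed.
Lemma mby1 (x1 x2 y2 : \bar R) : x1 <= x2 -> meets_boundary x1 x2 -oo y2.
Proof. by move=> le; exists x1, -oo; split => //; [exact: leNye | right; right]. Qed.
Lemma mby2 (x1 x2 y1 : \bar R) : x1 <= x2 -> meets_boundary x1 x2 y1 +oo.
Proof. by move=> le; exists x1, +oo; split => //; [exact: leey | right; left]. Qed.

Lemma to_cond F : Qset FX FY F -> conds F.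
Proof.
move=> [[[_ [Fx0 [F0y _]]] V] [MX MY]]; split.
- move=> x y1 y2 le; have := V -oo x y1 y2 (leNye _) le (mbx1 _ le).
  rewrite /volume !F0y => h; lra.
- move=> y x1 x2 le; have := V x1 x2 -oo y le (leNye _) (mby1 _ le).
  rewrite /volume !Fx0 => h; lra.
- move=> x y1 y2 le; have := V x +oo y1 y2 (leey _) le (mbx2 _ le).
  rewrite /volume !MY => h; lra.
- move=> y x1 x2 le; have := V x1 x2 y +oo le (leey _) (mby2 _ le).
  rewrite /volume !MX => h; lra.
Qed.

Lemma mb_cases (x1 x2 y1 y2 : \bar R) : meets_boundary x1 x2 y1 y2 ->
  [\/ x1 = -oo, x2 = +oo, y1 = -oo | y2 = +oo].
Proof.
move=> [x [y [l1 l2 l3 l4 [[]|[]] e]]]; subst.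
- by apply: Or42; apply/eqP; rewrite -leye_eq.
- by apply: Or41; apply/eqP; rewrite -leeNy_eq.
- by apply: Or44; apply/eqP; rewrite -leye_eq.
- by apply: Or43; apply/eqP; rewrite -leeNy_eq.
Qed.

Lemma from_cond F : biv_base F -> has_margins F FX FY -> conds F -> Qset FX FY F.
Proof.
move=> B [MX MY] [cA cB cC cD]; split; last by split.
split=> // x1 x2 y1 y2 lx ly /mb_cases; case: B => [_ [Fx0 [F0y _]]].
rewrite /volume; case=> ->.
- rewrite !F0y; have := cA x2 _ _ ly; lra.
- rewrite !MY; have := cC x1 _ _ ly; lra.
- rewrite !Fx0; have := cB y2 _ _ lx; lra.
- rewrite !MX; have := cD y1 _ _ lx; lra.
Qed.


Lemma closed1 (S : set (\bar R -> \bar R -> R)) : S !=set0 -> S `<=` Qset FX FY ->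
  Qset FX FY (pinf S) /\ Qset FX FY (psup S).
Proof.
move=> S0 SQ.
have bd x y : bnd S (fun F => F x y).
  by move=> F /SQ [[[h _] _] _].
have cS F : S F -> conds F by move=> /SQ /to_cond.
have cst (k : R) (a : (\bar R -> \bar R -> R) -> R) :
    (forall F, S F -> a F = k) -> inf [set a F | F in S] = k /\ sup [set a F | F in S] = k.
  by move=> h; rewrite (img_cst S0 h) inf1 sup1.
have mX x : inf [set F x +oo | F in S] = FX x /\ sup [set F x +oo | F in S] = FX x.
  by apply: cst => F /SQ [_ [? _]].
have mY y : inf [set F +oo y | F in S] = FY y /\ sup [set F +oo y | F in S] = FY y.
  by apply: cst => F /SQ [_ [_ ?]].
have z1 x : inf [set F x -oo | F in S] = 0%R /\ sup [set F x -oo | F in S] = 0%R.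
  by apply: cst => F /SQ [[[_ [? _]] _] _].
have z2 y : inf [set F -oo y | F in S] = 0%R /\ sup [set F -oo y | F in S] = 0%R.
  by apply: cst => F /SQ [[[_ [_ [? _]]] _] _].
have o1 : inf [set F +oo +oo | F in S] = 1%R /\ sup [set F +oo +oo | F in S] = 1%R.
  by apply: cst => F /SQ [[[_ [_ [_ ?]]] _] _].
case: (S0) => F0 SF0.
split; apply: from_cond.
- split; [move=> x y|split; [move=> x|split; [move=> y|]]].
  + rewrite /pinf; apply/andP; split.
      by apply: lb_le_inf; [exact: img0|move=> _ [F SF <-]; case/andP: (bd x y F SF)].
    apply: le_trans (inf_le_pt (bd x y) SF0) _; by case/andP: (bd x y F0 SF0).
  + exact: (z1 x).1.
  + exact: (z2 y).1.
  + exact: o1.1.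
- by split=> z; rewrite /pinf ?(mX z).1 ?(mY z).1.
- split.
  + move=> x y1 y2 le; apply: inf_mono => // F SF; by case: (cS F SF) => A _ _ _; apply: A.
  + move=> y x1 x2 le; apply: inf_mono => // F SF; by case: (cS F SF) => _ B _ _; apply: B.
  + move=> x y1 y2 le; rewrite -(mY y1).1 -(mY y2).1.
    apply: inf_diff => // F SF; rewrite (mY y1).1 (mY y2).1.
    by case: (cS F SF) => _ _ C _; apply: C.
  + move=> y x1 x2 le; rewrite -(mX x1).1 -(mX x2).1.
    apply: inf_diff => // F SF; rewrite (mX x1).1 (mX x2).1.
    by case: (cS F SF) => _ _ _ D; apply: D.
- split; [move=> x y|split; [move=> x|split; [move=> y|]]].
  + rewrite /psup; apply/andP; split.
      apply: le_trans _ (sup_ge_pt (bd x y) SF0); by case/andP: (bd x y F0 SF0).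
    by apply: ge_sup; [exact: img0|move=> _ [F SF <-]; case/andP: (bd x y F SF)].
  + exact: (z1 x).2.
  + exact: (z2 y).2.
  + exact: o1.2.
- by split=> z; rewrite /psup ?(mX z).2 ?(mY z).2.
- split.
  + move=> x y1 y2 le; apply: sup_mono => // F SF; by case: (cS F SF) => A _ _ _; apply: A.
  + move=> y x1 x2 le; apply: sup_mono => // F SF; by case: (cS F SF) => _ B _ _; apply: B.
  + move=> x y1 y2 le; rewrite -(mY y1).2 -(mY y2).2.
    apply: sup_diff => // F SF; rewrite (mY y1).2 (mY y2).2.
    by case: (cS F SF) => _ _ C _; apply: C.
  + move=> y x1 x2 le; rewrite -(mX x1).2 -(mX x2).2.
    apply: sup_diff => // F SF; rewrite (mX x1).2 (mX x2).2.
    by case: (cS F SF) => _ _ _ D; apply: D.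
Qed.
End Main.

Unset Implicit Arguments.
Set Strict Implicit.
Theorem lemma13 (R : realType) (FX FY : \bar R -> R) :
  univ_distribution FX -> univ_distribution FY ->
  (forall S : set (\bar R -> \bar R -> R), S !=set0 -> S `<=` Qset FX FY ->
     Qset FX FY (pinf S) /\ Qset FX FY (psup S)) /\
  (forall G : set (\bar R -> \bar R -> R), G !=set0 ->
     (forall F, G F -> biv_distribution F /\ has_margins F FX FY) ->
     Qset FX FY (pinf G) /\ Qset FX FY (psup G)).
Proof.
move=> _ _; split; first exact: closed1.
move=> G G0 h; apply: closed1 => // F /h [[B V] M]; split => //; split => //.
by move=> x1 x2 y1 y2 l1 l2 _; apply: V.
Qed.
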